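(* Let $M$ be a prefix matching of $\Gamma$ and suppose $\Gamma^M$ contains a directed cycle $a_1\to b_1\to a_2\to b_2\to\cdots\to a_p\to b_p\to a_{p+1}=a_1$ with all $a_i\in I_{k,l}(G)$ and $b_i\in I_{k-1,l}(G)$, where each $a_i\to b_i$ is an edge of $\Gamma$ not in $M$ and each $b_i\to a_{i+1}$ is a reversed edge of $M$. Let $d_i$ be the index such that $b_i$ is obtained from $a_i$ by deleting the entry at position $d_i$, and let $(c_i,u_i)$ be such that $a_{i+1}$ is obtained from $b_i=(b_{i,0},\dots,b_{i,k-1})$ by inserting $u_i$ between positions $c_i$ and $c_i+1$, i.e. $a_{i+1}=(b_{i,0},\dots,b_{i,c_i},u_i,b_{i,c_i+1},\dots,b_{i,k-1})$. Taking all indices modulo $p$, we have for all $i$: $d_{i+1}\neq c_i+1$, $d_{i+1}\le c_i+2$, and $d_i\le c_i+1$.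
   Context: $G$ is a finite simple connected graph with shortest-path distance $d$; $\ell(x_0,\dots,x_k)=\sum_{i=0}^{k-1}d(x_i,x_{i+1})$. A sequence is an element of $I_{k,l}(G)=\{(x_0,\dots,x_k)\in V(G)^{k+1}:x_i\ne x_{i+1}\ \forall i,\ \ell(x_0,\dots,x_k)=l\}$. $\Gamma$ is the directed graph on all sequences with an edge $a\to b$ whenever $a=(x_0,\dots,x_k)$, $b=(x_0,\dots,\hat x_i,\dots,x_k)$ for some $1\le i\le k-1$ and $\ell(b)=\ell(a)$. A matching is a set of pairwise vertex-disjoint edges of $\Gamma$; $\Gamma^M$ denotes $\Gamma$ with the edges of $M$ reversed. The matching state of a sequence $(x_0,\dots,x_k)$ is ''unmatched'', ''insert$(i,v)$'' (matched to $(x_0,\dots,x_i,v,x_{i+1},\dots,x_k)$) or ''delete$(i)$'' (matched to $(x_0,\dots,\hat x_i,\dots,x_k)$). A prefix matching is a matching such that whenever $(x_0,\dots,x_k)$ has state insert$(i,v)$ (resp. delete$(i)$), every sequence of the form $(x_0,\dots,x_{i+1},y_{i+2},\dots,y_{k'})$ has the same state. *)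

(* Defs.v *)
From mathcomp Require Import all_boot.
Set Implicit Arguments. Unset Strict Implicit. Unset Printing Implicit Defensive.

Section Defs.
Variables (T : finType) (e : rel T).

Fixpoint within (n : nat) (x y : T) : bool :=
  if n is n'.+1 then within n' x y || [exists z, within n' x z && e z y]
  else x == y.

(* shortest-path distance: least n <= #|T| with within n x y
   (for a connected graph this is always attained below #|T|) *)
Definition dist (x y : T) : nat := find (fun n => within n x y) (iota 0 #|T|).

Definition ell (s : seq T) : nat :=
  if s is x :: s' then sumn (pairmap dist x s') else 0.

Definition isSeq (s : seq T) : bool :=
  if s is x :: s' then path (fun a b => a != b) x s' else false.

Definition inI (k l : nat) (s : seq T) : bool :=
  [&& size s == k.+1, isSeq s & ell s == l].

Definition rem_at (i : nat) (s : seq T) : seq T := take i s ++ drop i.+1 s.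

(* (x_0,..,x_i,v,x_{i+1},..,x_k) *)
Definition ins_at (i : nat) (v : T) (s : seq T) : seq T :=
  take i.+1 s ++ v :: drop i.+1 s.

Definition Gamma (a b : seq T) : Prop :=
  isSeq a /\ isSeq b /\
  exists i, 1 <= i /\ i.+1 < size a /\ b = rem_at i a /\ ell b = ell a.

Definition matching (M : seq T -> seq T -> Prop) : Prop :=
  (forall a b, M a b -> Gamma a b) /\
  (forall a b a' b', M a b -> M a' b' -> (a, b) <> (a', b') ->
     [/\ a <> a', a <> b', b <> a' & b <> b']).

(* state insert(i,v) of x : x matched to ins_at i v x;
   state delete(i) of x : x matched to rem_at i x *)
Definition prefix_matching (M : seq T -> seq T -> Prop) : Prop :=
  matching M /\
  (forall x i v, isSeq x -> M (ins_at i v x) x ->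
     forall y, isSeq y -> take i.+2 y = take i.+2 x -> M (ins_at i v y) y) /\
  (forall x i, isSeq x -> M x (rem_at i x) ->
     forall y, isSeq y -> take i.+2 y = take i.+2 x -> M y (rem_at i y)).

End Defs.

(* Main.v *)
Require Import Defs.
From mathcomp Require Import all_boot.
From mathcomp Require Import zify.

Lemma rem_ins (T : finType) c (v : T) s : c < size s -> rem_at c.+1 (ins_at c v s) = s.
Proof.
move=> hc; rewrite /rem_at /ins_at.
have hs : size (take c.+1 s) = c.+1 by rewrite size_takel.
rewrite takel_cat ?hs // take_takel //.
rewrite drop_cat hs ifF; last by apply/negbTE; rewrite -leqNgt.
by rewrite subSnn /= drop0 cat_take_drop.
Qed.

Lemma size_rem_lt (T : finType) d (s : seq T) : size (rem_at d s) < size s -> d < size s.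
Proof.
rewrite /rem_at; case: (ltnP d (size s)) => // h.
by rewrite take_oversize // drop_oversize ?cats0 ?ltnn // (leq_trans h).
Qed.

Lemma take_rem (T : finType) n d (s : seq T) : n <= d -> d < size s ->
  take n (rem_at d s) = take n s.
Proof.
move=> hn hd; rewrite /rem_at takel_cat ?take_takel // size_takel //.
exact: ltnW.
Qed.

Lemma size_ins (T : finType) c (v : T) s : size (ins_at c v s) = (size s).+1.
Proof.
by rewrite /ins_at size_cat /= size_take size_drop; case: ltnP => h; lia.
Qed.

Theorem lemma3p3 (T : finType) (e : rel T)
  (e_sym : symmetric e) (e_irr : irreflexive e)
  (e_conn : forall x y : T, connect e x y)
  (M : seq T -> seq T -> Prop) (HM : prefix_matching e M)
  (k l p : nat) (hk : 0 < k) (hp : 0 < p)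
  (a b : nat -> seq T) (c d : nat -> nat) (u : nat -> T)
  (ha : forall i, i < p -> inI e k l (a i))
  (hb : forall i, i < p -> inI e k.-1 l (b i))
  (hab : forall i, i < p -> Gamma e (a i) (b i) /\ ~ M (a i) (b i))
  (hd : forall i, i < p -> b i = rem_at (d i) (a i))
  (hba : forall i, i < p -> M (a (i.+1 %% p)) (b i))
  (hc : forall i, i < p -> a (i.+1 %% p) = ins_at (c i) (u i) (b i)) :
  forall i, i < p ->
    [/\ d (i.+1 %% p) != (c i).+1, d (i.+1 %% p) <= (c i).+2 & d i <= (c i).+1].
Proof.
case: HM => [[_ Hdis] [Hins Hdel]].
have chain : forall x y z, M x y -> M y z -> x <> y -> False.
  move=> x y z h1 h2 nxy.
  have [_ _ H _] := Hdis _ _ _ _ h1 h2 (fun E => nxy (f_equal fst E)).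
  exact: H.
have sa : forall i, i < p -> size (a i) = k.+1.
  by move=> i /ha /and3P [/eqP].
have sb : forall i, i < p -> size (b i) = k.
  by move=> i /hb /and3P [/eqP ->]; rewrite prednK.
have seqa : forall i, i < p -> isSeq (a i) by move=> i /ha /and3P [].
have seqb : forall i, i < p -> isSeq (b i) by move=> i /hb /and3P [].
have dlt : forall i, i < p -> d i <= k.
  move=> i ip; have := @size_rem_lt _ (d i) (a i).
  by rewrite -hd // sa // sb // ltnSn => /(_ isT).
move=> i ip.
set j := i.+1 %% p.
have jp : j < p by rewrite /j ltn_mod.
have Hc := hc i ip; have Hb := hba i ip; rewrite -/j in Hc Hb.
split.
- apply/negP => /eqP E.
  have [_ nM] := hab j jp.
  apply: nM; rewrite hd // E Hc rem_ins //.
  by rewrite -Hc. by rewrite sb // -ltnS -E ltnS dlt.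
- rewrite leqNgt; apply/negP => lt.
  have ck : (c i).+1 < size (b i) by rewrite sb //; move: (dlt j jp); lia.
  have Mdel : M (a j) (rem_at (c i).+1 (a j)).
    by rewrite {2}Hc rem_ins // ltnW.
  have := Hdel _ _ (seqa j jp) Mdel (b j) (seqb j jp).
  rewrite hd // take_rem //; last by rewrite sa // ltnS dlt.
  move=> /(_ erefl) Mb.
  have Hn := hba j jp.
  rewrite -hd // in Mb; apply: (chain _ _ _ Hn Mb).
  by move=> E; have := congr1 size E; rewrite sa ?ltn_mod // sb //; lia.
- rewrite leqNgt; apply/negP => lt.
  pose j' := if i is i'.+1 then i' else p.-1.
  have j'p : j' < p by rewrite /j'; case: (i) ip => [|i'] /=; lia.
  have j'E : j'.+1 %% p = i.
    rewrite /j'; case: (i) ip => [|i'] ip'.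
      by rewrite prednK // modnn.
    by rewrite modn_small.
  have Hprev := hba j' j'p; rewrite j'E in Hprev.
  have Mi : M (ins_at (c i) (u i) (b i)) (b i) by rewrite -Hc.
  have := Hins _ _ _ (seqb i ip) Mi (a i) (seqa i ip).
  rewrite hd // take_rem //; last by rewrite sa // ltnS dlt.
  move=> /(_ erefl) Ma.
  apply: (chain _ _ _ Ma Hprev).
  by move=> E; have := congr1 size E; rewrite size_ins; lia.
Qed.
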